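(* Let $H_1,H_2$ be separable Hilbert spaces, $K\in B(H_1)$ and $L\in B(H_2)$. If a sequence $\{x_n\oplus y_n\}_{n\geqslant1}$ in $H_1\oplus H_2$ is a $K\oplus L$-frame for $H_1\oplus H_2$, then $\{x_n\}_{n\geqslant1}$ is a $K$-frame for $H_1$ and $\{y_n\}_{n\geqslant1}$ is an $L$-frame for $H_2$.
   Context: $H_1\oplus H_2$ is the Hilbert space of pairs $x\oplus y$ with inner product $\langle x\oplus y,a\oplus b\rangle=\langle x,a\rangle+\langle y,b\rangle$. For $K\in B(H_1)$, $L\in B(H_2)$, $K\oplus L\in B(H_1\oplus H_2)$ is defined by $(K\oplus L)(x\oplus y)=K(x)\oplus L(y)$. For a Hilbert space $H$ and $K\in B(H)$, a sequence $\{z_n\}_{n\geqslant1}$ in $H$ is a $K$-frame if there are $A,B>0$ with $A\|K^*z\|^2\leq\sum_{n=1}^\infty|\langle z,z_n\rangle|^2\leq B\|z\|^2$ for all $z\in H$. *)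

(* Defs.v *)
From HB Require Import structures.
From mathcomp Require Import all_boot all_order all_algebra.
From mathcomp Require Import all_classical all_reals ereal sequences.
From mathcomp Require Import complex.
Set Implicit Arguments. Unset Strict Implicit. Unset Printing Implicit Defensive.
Import Order.TTheory GRing.Theory Num.Theory.
Local Open Scope ring_scope.

Section HilbertDefs.
Variable R : realType.
Local Notation C := R[i].

Definition sqmod (c : C) : R := (complex.Re c) ^+ 2 + (complex.Im c) ^+ 2.

Variable V : lmodType C.
Variable ip : V -> V -> C.

Definition inner_product_axioms : Prop :=
  [/\ (forall (a : C) (x y z : V), ip (a *: x + y) z = a * ip x z + ip y z),
      (forall x y : V, ip y x = (ip x y)^*%C),
      (forall x : V, 0 <= complex.Re (ip x x)) &
      (forall x : V, ip x x = 0 -> x = 0)].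

Definition ipnorm (x : V) : R := Num.sqrt (complex.Re (ip x x)).

Definition ip_complete : Prop :=
  forall u : nat -> V,
    (forall e : R, 0 < e -> exists N : nat, forall m n : nat,
        (N <= m)%N -> (N <= n)%N -> ipnorm (u m - u n) < e) ->
    exists l : V, forall e : R, 0 < e -> exists N : nat, forall n : nat,
        (N <= n)%N -> ipnorm (u n - l) < e.

Definition ip_separable : Prop :=
  exists d : nat -> V, forall (x : V) (e : R), 0 < e ->
    exists n : nat, ipnorm (x - d n) < e.

Definition hilbert : Prop := inner_product_axioms /\ ip_complete.

Definition separable_hilbert : Prop := hilbert /\ ip_separable.

Definition bounded_op (K : V -> V) : Prop :=
  (forall (a : C) (x y : V), K (a *: x + y) = a *: K x + K y) /\
  exists M : R, forall x : V, ipnorm (K x) <= M * ipnorm x.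

Definition is_adjoint (K Ks : V -> V) : Prop :=
  forall x y : V, ip (K x) y = ip x (Ks y).

Definition K_frame (K : V -> V) (zs : nat -> V) : Prop :=
  exists A B : R, 0 < A /\ 0 < B /\
    exists Ks : V -> V, is_adjoint K Ks /\
      forall z : V,
        ((A * ipnorm (Ks z) ^+ 2)%:E <=
           \sum_(0 <= n <oo) (sqmod (ip z (zs n)))%:E)%E /\
        (\sum_(0 <= n <oo) (sqmod (ip z (zs n)))%:E <=
           (B * ipnorm z ^+ 2)%:E)%E.

End HilbertDefs.

Definition dsum_ip (R : realType) (V1 V2 : lmodType R[i])
  (ip1 : V1 -> V1 -> R[i]) (ip2 : V2 -> V2 -> R[i]) :
  (V1 * V2)%type -> (V1 * V2)%type -> R[i] :=
  fun p q => ip1 p.1 q.1 + ip2 p.2 q.2.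

Definition dsum_op (V1 V2 : Type) (K : V1 -> V1) (L : V2 -> V2) :
  (V1 * V2)%type -> (V1 * V2)%type :=
  fun p => (K p.1, L p.2).

(* Main.v *)
Require Import Defs.
From HB Require Import structures.
From mathcomp Require Import all_boot all_order all_algebra.
From mathcomp Require Import all_classical all_reals ereal sequences.
From mathcomp Require Import complex.
Import Order.TTheory GRing.Theory Num.Theory.
Local Open Scope ring_scope.

Lemma frame_part (R : realType) (V W : lmodType R[i])
  (ipV : V -> V -> R[i]) (ipW : W -> W -> R[i])
  (K : V -> V) (KW : W -> W) (xs : nat -> V) (ws : nat -> W)
  (e : V -> W) (p : W -> V) :
  (forall v, 0 <= complex.Re (ipV v v)) ->
  (forall w, 0 <= complex.Re (ipW w w)) ->
  (forall v n, ipW (e v) (ws n) = ipV v (xs n)) ->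
  (forall v, complex.Re (ipW (e v) (e v)) = complex.Re (ipV v v)) ->
  (forall u v, ipW (KW (e u)) (e v) = ipV (K u) v) ->
  (forall u w, ipW (e u) w = ipV u (p w)) ->
  (forall w, complex.Re (ipV (p w) (p w)) <= complex.Re (ipW w w)) ->
  K_frame ipW KW ws -> K_frame ipV K xs.
Proof.
move=> pV pW hs hn hK hp hpn [A [B [A0 [B0 [Ks [adj fr]]]]]].
exists A, B; split => //; split => //.
exists (fun v => p (Ks (e v))); split.
  by move=> u v; rewrite -hK adj hp.
move=> z; have [fl fu] := fr (e z).
have Es : (\sum_(0 <= n <oo) (sqmod (ipW (e z) (ws n)))%:E =
          \sum_(0 <= n <oo) (sqmod (ipV z (xs n)))%:E)%E.
  by apply: eq_eseriesr => n _; rewrite hs.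
rewrite -Es; split.
  apply: le_trans fl; rewrite lee_fin; apply: ler_wpM2l; first exact: ltW.
  rewrite /ipnorm !sqr_sqrtr //; exact: hpn.
by move: fu; rewrite /ipnorm !sqr_sqrtr // hn.
Qed.

Lemma ip_zero_l (R : realType) (V : lmodType R[i]) (ip : V -> V -> R[i]) :
  (forall (a : R[i]) (x y z : V), ip (a *: x + y) z = a * ip x z + ip y z) ->
  forall z, ip 0 z = 0.
Proof.
move=> lin z; have := lin (-1) 0 0 z.
by rewrite scaler0 add0r mulN1r addNr.
Qed.

Lemma ip_zero_r (R : realType) (V : lmodType R[i]) (ip : V -> V -> R[i]) :
  inner_product_axioms ip -> forall z, ip z 0 = 0.
Proof.
case=> lin sym _ _ z; rewrite sym ip_zero_l //.
by rewrite conjc0.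
Qed.

Lemma op_zero (R : realType) (V : lmodType R[i]) (ip : V -> V -> R[i]) K :
  bounded_op ip K -> K 0 = 0.
Proof.
case=> lin _; have := lin (-1) 0 0.
by rewrite scaler0 add0r scaleN1r addNr.
Qed.

Theorem corollary2p5 (R : realType) (V1 V2 : lmodType R[i])
  (ip1 : V1 -> V1 -> R[i]) (ip2 : V2 -> V2 -> R[i])
  (H1 : separable_hilbert ip1) (H2 : separable_hilbert ip2)
  (K : V1 -> V1) (L : V2 -> V2)
  (hK : bounded_op ip1 K) (hL : bounded_op ip2 L)
  (x : nat -> V1) (y : nat -> V2) :
  K_frame (dsum_ip ip1 ip2) (dsum_op K L) (fun n => (x n, y n)) ->
  K_frame ip1 K x /\ K_frame ip2 L y.
Proof.
move: H1 H2 => [[A1 _] _] [[A2 _] _].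
have A1' := A1; have A2' := A2.
move: A1' A2' => [l1 s1 p1 d1] [l2 s2 p2 d2].
have z1l := @ip_zero_l _ _ ip1 l1; have z2l := @ip_zero_l _ _ ip2 l2.
have z1r := @ip_zero_r _ _ _ A1; have z2r := @ip_zero_r _ _ _ A2.
have K0 := @op_zero _ _ _ _ hK; have L0 := @op_zero _ _ _ _ hL.
have pW : forall w : (V1 * V2)%type, 0 <= complex.Re (dsum_ip ip1 ip2 w w).
  by move=> w; rewrite /dsum_ip raddfD /= addr_ge0.
move=> fr; split.
- apply: (@frame_part _ _ _ ip1 (dsum_ip ip1 ip2) K (dsum_op K L) x (fun n => (x n, y n)) (fun v => (v, 0)) fst p1 pW _ _ _ _ _ fr).
  + by move=> v n; rewrite /dsum_ip /= z2l addr0.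
  + by move=> v; rewrite /dsum_ip /= z2l addr0.
  + by move=> u v; rewrite /dsum_ip /dsum_op /= L0 z2l addr0.
  + by move=> u w; rewrite /dsum_ip /= z2l addr0.
  + move=> w; rewrite /dsum_ip raddfD /= lerDl; exact: p2.
- apply: (@frame_part _ _ _ ip2 (dsum_ip ip1 ip2) L (dsum_op K L) y (fun n => (x n, y n)) (fun v => (0, v)) snd p2 pW _ _ _ _ _ fr).
  + by move=> v n; rewrite /dsum_ip /= z1l add0r.
  + by move=> v; rewrite /dsum_ip /= z1l add0r.
  + by move=> u v; rewrite /dsum_ip /dsum_op /= K0 z1l add0r.
  + by move=> u w; rewrite /dsum_ip /= z1l add0r.
  + move=> w; rewrite /dsum_ip raddfD /= lerDr; exact: p1.
Qed.
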